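(* Let $\sigma(x)=\mathrm{e}^{-x^2/2}$ and let $p_m(x)=\pi^{-1/4}2^{-m/2}(m!)^{-1/2}H_m(x)$ be the orthonormal Hermite polynomials on $\mathbf{R}$ (so $\int_{\mathbf{R}}p_mp_k\mathrm{e}^{-x^2}\,\mathrm{d}x=\delta_{m,k}$), where $H_m$ are the Hermite polynomials. Let $z=\mathrm{e}^{i\theta}$ with $|\theta|<\pi/4$, put $p_{m,z}(x)=z^{1/2}p_m(zx)$ and $N_{m,z}=\int_{-\infty}^\infty|p_{m,z}(x)\sigma(zx)|^2\,\mathrm{d}x$ with $\sigma(zx)=\mathrm{e}^{-z^2x^2/2}$, and let $s_\theta=(\cos 2\theta)^{1/2}$. Then for all non-negative integers $n$, \[ N_{2n,z}\le\pi(n+1)^{1/2}\,2^{4n+2}\,s_\theta^{-4n-1}. \]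
   Context: $H_m(x)=(2x)^m-\frac{m!}{1!(m-2)!}(2x)^{m-2}+\frac{m!}{2!(m-4)!}(2x)^{m-4}-\cdots$ are the (physicists') Hermite polynomials; $z^{1/2}$ is the principal square root. *)

(* Defs.v *)
From Stdlib Require Import Reals Lra Factorial.
From Coquelicot Require Import Coquelicot.
Open Scope R_scope.

Definition Cexp (w : C) : C :=
  (exp (fst w) * cos (snd w), exp (fst w) * sin (snd w)).

(* principal square root of a complex number (branch cut on the negative axis,
   Re >= 0, and Im >= 0 on the negative real axis) *)
Definition Csqrt (w : C) : C :=
  let r := Cmod w in
  (sqrt ((r + fst w) / 2),
   (if Rlt_dec (snd w) 0 then -1 else 1) * sqrt ((r - fst w) / 2)).

(* physicists' Hermite polynomial, explicit formula, evaluated at a complex point: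
   H_m(w) = sum_{k <= m/2} (-1)^k m!/(k!(m-2k)!) (2w)^(m-2k) *)
Definition hermiteH (m : nat) (w : C) : C :=
  sum_n (fun k =>
    scal ((-1) ^ k * INR (Factorial.fact m) / (INR (Factorial.fact k) * INR (Factorial.fact (m - 2 * k))))
         (pow_n (RtoC 2 * w)%C (m - 2 * k))) (Nat.div2 m).

Definition orthoP (m : nat) (w : C) : C :=
  scal (/ Rpower PI (1/4) * / Rpower 2 (INR m / 2) * / sqrt (INR (Factorial.fact m)))
       (hermiteH m w).

Definition sigmaC (w : C) : C := Cexp (- (w * w) / RtoC 2)%C.

Definition pmz (m : nat) (z : C) (x : R) : C := (Csqrt z * orthoP m (z * RtoC x))%C.

Definition Nintegrand (m : nat) (z : C) (x : R) : R :=
  (Cmod (pmz m z x * sigmaC (z * RtoC x))%C) ^ 2.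

(* Main.v *)
Require Import Defs.
From Stdlib Require Import Reals Lra Lia Factorial Classical.
From Coquelicot Require Import Coquelicot.
Open Scope R_scope.

Lemma le_plusR (a b : R) : 0 <= b -> a <= plus a b.
Proof. unfold plus; simpl. lra. Qed.

Lemma scalR (a b : R) : scal a b = a * b.
Proof. reflexivity. Qed.

Lemma exp_ge_partial (y : R) (N : nat) : 0 <= y ->
  sum_f_R0 (fun k => y ^ k / INR (Factorial.fact k)) N <= exp y.
Proof.
  intros Hy. pose proof (is_exp_Reals y) as H.
  assert (E : forall M, sum_n (fun k => scal (pow_n y k) (/ INR (Factorial.fact k))) M = sum_f_R0 (fun k => y ^ k / INR (Factorial.fact k)) M).
  { intros M. rewrite sum_n_Reals. apply sum_eq. intros i _. rewrite scalR, pow_n_pow. reflexivity. }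
  rewrite <- E.
  apply (is_lim_seq_incr_compare (sum_n (fun k => scal (pow_n y k) (/ INR (Factorial.fact k))))).
  - exact H.
  - intros k. rewrite sum_Sn. apply le_plusR.
    rewrite scalR, pow_n_pow.
    apply Rmult_le_pos. apply pow_le; auto.
      apply Rlt_le, Rinv_0_lt_compat, INR_fact_lt_0.
Qed.

Lemma exp_ge_two (y : R) (J : nat) : 0 <= y ->
  (1 + y) * y ^ J <= INR (Factorial.fact (S J)) * exp y.
Proof.
  intros Hy.
  pose proof (exp_ge_partial y (S J) Hy) as H.
  assert (Hs : forall M, 0 <= sum_f_R0 (fun k => y ^ k / INR (Factorial.fact k)) M).
  { intros M. apply cond_pos_sum. intros k.
    apply Rmult_le_pos. apply pow_le; auto.
      apply Rlt_le, Rinv_0_lt_compat, INR_fact_lt_0. }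
  destruct J as [|J].
  - simpl in H. simpl. lra.
  - change (sum_f_R0 (fun k => y ^ k / INR (Factorial.fact k)) J + y ^ S J / INR (Factorial.fact (S J)) + y ^ S (S J) / INR (Factorial.fact (S (S J))) <= exp y) in H.
    pose proof (Hs J).
    rewrite (fact_simpl (S J)) in *.
    rewrite mult_INR in *.
    pose proof (INR_fact_lt_0 (S J)).
    assert (0 <= y ^ S J) by (apply pow_le; auto).
    assert (1 <= INR (S (S J))) by (rewrite S_INR; pose proof (pos_INR (S J)); lra).
    assert (y ^ S J / INR (Factorial.fact (S J)) + y ^ S (S J) / (INR (S (S J)) * INR (Factorial.fact (S J))) <= exp y) by lra.
    set (F := INR (Factorial.fact (S J))) in *.
    set (s := INR (S (S J))) in *.
    apply Rle_trans with (s * F * (y ^ S J / F + y ^ S (S J) / (s * F))).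
    + replace (s * F * (y ^ S J / F + y ^ S (S J) / (s * F))) with (s * y ^ S J + y ^ S (S J)) by (field; lra).
      change (y ^ S (S J)) with (y * y ^ S J). nra.
    + apply Rmult_le_compat_l; nra.
Qed.

Lemma improper_of_bound (f : R -> R) (B : R) :
  (forall x, continuous f x) -> (forall x, 0 <= f x) ->
  (forall a b, a <= b -> RInt f a b <= B) ->
  exists N, is_RInt_gen f (Rbar_locally m_infty) (Rbar_locally p_infty) N /\ N <= B.
Proof.
  intros Hc Hp HB.
  assert (Hex : forall a b, ex_RInt f a b).
  { intros a b. apply (@ex_RInt_continuous R_CompleteNormedModule). intros; apply Hc. }
  set (E := fun y => exists a b, a <= b /\ y = RInt f a b).
  assert (HbE : bound E).
  { exists B. intros y [a [b [Hab ->]]]. apply HB; auto. }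
  assert (HnE : exists y, E y).
  { exists (RInt f 0 0). exists 0, 0. split; auto; lra. }
  destruct (completeness E HbE HnE) as [L [HL1 HL2]].
  exists L. split.
  2: { apply HL2. intros y [a [b [Hab ->]]]. apply HB; auto. }
  intros P [eps HP].
  assert (Hx : exists a0 b0, a0 <= b0 /\ L - eps < RInt f a0 b0).
  { apply NNPP. intros Hn.
    assert (is_upper_bound E (L - eps)).
    { intros y [a [b [Hab ->]]]. apply Rnot_lt_le. intros Hlt. apply Hn. exists a, b. auto. }
    pose proof (HL2 _ H). destruct eps; simpl in *; lra. }
  destruct Hx as [a0 [b0 [Hab0 Hgt]]].
  apply Filter_prod with (Q := fun a => a < a0) (R := fun b => b0 < b).
  - exists a0. auto.
  - exists b0. auto.
  - intros a b Ha Hb. simpl. exists (RInt f a b). split.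
    + apply (@RInt_correct R_CompleteNormedModule). apply Hex.
    + apply HP.
      assert (Hup : RInt f a b <= L).
      { apply HL1. exists a, b. split; auto; lra. }
      assert (Hchas : RInt f a b = RInt f a a0 + RInt f a0 b0 + RInt f b0 b).
      { rewrite <- (RInt_Chasles f a a0 b) by apply Hex.
        rewrite <- (RInt_Chasles f a0 b0 b) by apply Hex.
        unfold plus; simpl. ring. }
      assert (0 <= RInt f a a0) by (apply RInt_ge_0; auto; lra).
      assert (0 <= RInt f b0 b) by (apply RInt_ge_0; auto; lra).
      change (Rabs (RInt f a b - L) < eps).
      apply Rabs_def1; lra.
Qed.

Lemma RInt_lorentz_bound (f : R -> R) (K c : R) : 0 < c -> 0 <= K ->
  (forall x, continuous f x) ->
  (forall x, f x <= K / (1 + c * x ^ 2)) ->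
  forall a b, a <= b -> RInt f a b <= K * PI / sqrt c.
Proof.
  intros Hc HK Hcont Hf a b Hab.
  assert (Hsc : 0 < sqrt c) by (apply sqrt_lt_R0; auto).
  assert (Hsq : sqrt c * sqrt c = c) by (apply sqrt_sqrt; lra).
  set (g := fun x => K / (1 + c * x ^ 2)).
  set (F := fun x => K / sqrt c * atan (sqrt c * x)).
  assert (Hd : forall x, is_derive F x (g x)).
  { intros x. unfold F, g. auto_derive; auto.
    assert (E: sqrt c * x * (sqrt c * x * 1) = (sqrt c * sqrt c) * x^2) by ring. rewrite E, Hsq.
    field. split; try lra. nra. }
  assert (Hgc : forall x, continuous g x).
  { intros x. apply (@ex_derive_continuous R_AbsRing R_NormedModule). unfold g. auto_derive. nra. }
  assert (HI : is_RInt g a b (minus (F b) (F a))).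
  { apply (@is_RInt_derive R_CompleteNormedModule); intros. apply Hd. intros. apply Hgc. }
  apply Rle_trans with (RInt g a b).
  - apply RInt_le.
    + exact Hab.
    + apply (@ex_RInt_continuous R_CompleteNormedModule). intros; apply Hcont.
    + eexists; exact HI.
    + intros; apply Hf.
  - rewrite (is_RInt_unique _ _ _ _ HI). unfold minus, plus, opp; simpl. unfold F.
    pose proof (atan_bound (sqrt c * b)). pose proof (atan_bound (sqrt c * a)).
    assert (0 <= K / sqrt c) by (apply Rmult_le_pos; auto; apply Rlt_le, Rinv_0_lt_compat; auto).
    replace (K * PI / sqrt c) with (K / sqrt c * PI) by (field; lra).
    replace (K / sqrt c * atan (sqrt c * b) + - (K / sqrt c * atan (sqrt c * a))) with (K / sqrt c * (atan (sqrt c * b) - atan (sqrt c * a))) by ring.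
    apply Rmult_le_compat_l; auto. lra.
Qed.

Lemma cs_aux (b : nat -> R) (u : R) N :
  2 * u * sum_f_R0 b N <= sum_f_R0 (fun k => b k ^ 2) N + INR (S N) * u ^ 2.
Proof.
  induction N.
  - simpl. pose proof (pow2_ge_0 (b 0%nat - u)). nra.
  - change (sum_f_R0 b (S N)) with (sum_f_R0 b N + b (S N)).
    change (sum_f_R0 (fun k => b k ^ 2) (S N)) with (sum_f_R0 (fun k => b k ^ 2) N + b (S N) ^ 2).
    rewrite (S_INR (S N)). pose proof (pow2_ge_0 (b (S N) - u)). nra.
Qed.

Lemma cs_sum (b : nat -> R) N :
  (sum_f_R0 b N) ^ 2 <= INR (S N) * sum_f_R0 (fun k => b k ^ 2) N.
Proof.
  induction N.
  - simpl. nra.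
  - change (sum_f_R0 b (S N)) with (sum_f_R0 b N + b (S N)).
    change (sum_f_R0 (fun k => b k ^ 2) (S N)) with (sum_f_R0 (fun k => b k ^ 2) N + b (S N) ^ 2).
    pose proof (cs_aux b (b (S N)) N). rewrite (S_INR (S N)).
    assert (0 <= sum_f_R0 (fun k => b k ^ 2) N) by (apply cond_pos_sum; intros; apply pow2_ge_0).
    nra.
Qed.

Lemma term_le_sum (f : nat -> R) N i : (forall k, 0 <= f k) -> (i <= N)%nat -> f i <= sum_f_R0 f N.
Proof.
  intros Hf Hi. induction N.
  - assert (i = 0%nat) by lia. subst. simpl. lra.
  - destruct (Nat.eq_dec i (S N)).
    + subst. change (sum_f_R0 f (S N)) with (sum_f_R0 f N + f (S N)). assert (0 <= sum_f_R0 f N) by (apply cond_pos_sum; auto). lra.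
    + change (sum_f_R0 f (S N)) with (sum_f_R0 f N + f (S N)). pose proof (Hf (S N)). assert (i <= N)%nat by lia. specialize (IHN H0). lra.
Qed.

Lemma even_sub_sum (f : nat -> R) n : (forall k, 0 <= f k) ->
  sum_f_R0 (fun k => f (2 * k)%nat) n <= sum_f_R0 f (2 * n).
Proof.
  intros Hf. induction n.
  - simpl. lra.
  - replace (2 * S n)%nat with (S (S (2 * n))) by lia.
    change (sum_f_R0 f (S (S (2 * n)))) with (sum_f_R0 f (2 * n) + f (S (2 * n)) + f (S (S (2 * n)))).
    change (sum_f_R0 (fun k => f (2 * k)%nat) (S n)) with (sum_f_R0 (fun k => f (2 * k)%nat) n + f (2 * S n)%nat).
    replace (2 * S n)%nat with (S (S (2 * n))) by lia.
    pose proof (Hf (S (2 * n))). lra.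
Qed.

Lemma C_nonneg n k : 0 <= Binomial.C n k.
Proof.
  unfold Binomial.C. apply Rmult_le_pos. apply pos_INR.
  apply Rlt_le, Rinv_0_lt_compat, Rmult_lt_0_compat; apply INR_fact_lt_0.
Qed.

Lemma central_binom_le k : Binomial.C (2 * k) k <= 4 ^ k.
Proof.
  replace (4 ^ k) with ((1 + 1) ^ (2 * k)).
  2: { rewrite pow_mult. f_equal. lra. }
  rewrite binomial.
  replace (Binomial.C (2 * k) k) with (Binomial.C (2 * k) k * 1 ^ k * 1 ^ (2 * k - k)) by (rewrite !pow1; ring).
  apply (term_le_sum (fun i => Binomial.C (2 * k) i * 1 ^ i * 1 ^ (2 * k - i))).
  - intros. rewrite !pow1. rewrite !Rmult_1_r. apply C_nonneg.
  - lia.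
Qed.

Definition Acoef (n k : nat) : R :=
  INR (fact (2 * n)) / (INR (fact k) * INR (fact (2 * n - 2 * k))).

Lemma Acoef_id n k : (k <= n)%nat ->
  Acoef n k ^ 2 * INR (fact (S (2 * n - 2 * k))) =
  INR (fact (2 * n)) * INR (S (2 * n - 2 * k)) * (Binomial.C (2 * n) (2 * k) * Binomial.C (2 * k) k).
Proof.
  intros Hk. unfold Acoef, Binomial.C.
  replace (2 * k - k)%nat with k by lia.
  rewrite fact_simpl, mult_INR.
  pose proof (INR_fact_lt_0 (2 * n)). pose proof (INR_fact_lt_0 k).
  pose proof (INR_fact_lt_0 (2 * n - 2 * k)). pose proof (INR_fact_lt_0 (2 * k)).
  field. lra.
Qed.

Lemma sumA n :
  sum_f_R0 (fun k => Acoef n k ^ 2 * 4 ^ (2 * n - 2 * k) * INR (fact (S (2 * n - 2 * k)))) n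
  <= INR (fact (2 * n)) * INR (S (2 * n)) * 6 ^ (2 * n).
Proof.
  set (f := fun i => Binomial.C (2 * n) i * 2 ^ i * 4 ^ (2 * n - i)).
  assert (Hf : forall i, 0 <= f i).
  { intros i. unfold f. apply Rmult_le_pos. apply Rmult_le_pos. apply C_nonneg. apply pow_le; lra. apply pow_le; lra. }
  assert (Hbin : sum_f_R0 f (2 * n) = 6 ^ (2 * n)).
  { unfold f. replace 6 with (2 + 4) by lra. rewrite binomial. reflexivity. }
  pose proof (pos_INR (S (2 * n))). pose proof (INR_fact_lt_0 (2 * n)).
  apply Rle_trans with (sum_f_R0 (fun k => INR (fact (2 * n)) * INR (S (2 * n)) * f (2 * k)%nat) n).
  - apply sum_Rle. intros k Hk.
    replace (Acoef n k ^ 2 * 4 ^ (2 * n - 2 * k) * INR (fact (S (2 * n - 2 * k))))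
      with (Acoef n k ^ 2 * INR (fact (S (2 * n - 2 * k))) * 4 ^ (2 * n - 2 * k)) by ring.
    rewrite Acoef_id by lia.
    unfold f. rewrite pow_mult. replace (2 ^ 2) with 4 by ring.
    pose proof (central_binom_le k). pose proof (C_nonneg (2 * n) (2 * k)).
    pose proof (C_nonneg (2 * k) k).
    assert (0 <= 4 ^ (2 * n - 2 * k)) by (apply pow_le; lra).
    assert (INR (S (2 * n - 2 * k)) <= INR (S (2 * n))) by (apply le_INR; lia).
    assert (0 <= INR (S (2 * n - 2 * k))) by apply pos_INR.
    assert (HH: Binomial.C (2 * n) (2 * k) * Binomial.C (2 * k) k * 4 ^ (2 * n - 2 * k) <= Binomial.C (2 * n) (2 * k) * 4 ^ k * 4 ^ (2 * n - 2 * k)).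
    { apply Rmult_le_compat_r; auto. apply Rmult_le_compat_l; auto. }
    assert (0 <= Binomial.C (2 * n) (2 * k) * Binomial.C (2 * k) k * 4 ^ (2 * n - 2 * k)) by (apply Rmult_le_pos; auto; apply Rmult_le_pos; auto).
    set (F := INR (fact (2 * n))) in *.
    replace (F * INR (S (2 * n - 2 * k)) * (Binomial.C (2 * n) (2 * k) * Binomial.C (2 * k) k) * 4 ^ (2 * n - 2 * k))
      with (F * (INR (S (2 * n - 2 * k)) * (Binomial.C (2 * n) (2 * k) * Binomial.C (2 * k) k * 4 ^ (2 * n - 2 * k)))) by ring.
    replace (F * INR (S (2 * n)) * (Binomial.C (2 * n) (2 * k) * 4 ^ k * 4 ^ (2 * n - 2 * k)))
      with (F * (INR (S (2 * n)) * (Binomial.C (2 * n) (2 * k) * 4 ^ k * 4 ^ (2 * n - 2 * k)))) by ring.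
    apply Rmult_le_compat_l. lra.
    apply Rmult_le_compat; auto.
  - assert (E : sum_f_R0 (fun k => INR (fact (2 * n)) * INR (S (2 * n)) * f (2 * k)%nat) n =
      INR (fact (2 * n)) * INR (S (2 * n)) * sum_f_R0 (fun k => f (2 * k)%nat) n).
    { rewrite scal_sum. apply sum_eq. intros; ring. }
    rewrite E. apply Rmult_le_compat_l. nra.
    rewrite <- Hbin. apply even_sub_sum. auto.
Qed.

Lemma pow_le_one (c : R) k : 0 <= c <= 1 -> c ^ k <= 1.
Proof. intros H. induction k; simpl. lra. assert (0 <= c ^ k) by (apply pow_le; lra). nra. Qed.

Lemma pow_div (y c : R) k : c <> 0 -> (y / c) ^ k = y ^ k / c ^ k.
Proof. intros Hc. unfold Rdiv. rewrite Rpow_mult_distr, pow_inv. reflexivity. Qed.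

Lemma pow_decr (c : R) (J M : nat) : 0 < c <= 1 -> (J <= M)%nat -> c ^ M <= c ^ J.
Proof.
  intros Hc HJ. replace M with (J + (M - J))%nat by lia. rewrite pow_add.
  assert (0 < c ^ J) by (apply pow_lt; lra).
  assert (c ^ (M - J) <= 1) by (apply pow_le_one; lra).
  assert (0 <= c ^ (M - J)) by (apply pow_le; lra). nra.
Qed.

Lemma term_bound (c x : R) (J M : nat) : 0 < c <= 1 -> (J <= M)%nat ->
  (1 + c * x ^ 2) * (x ^ 2) ^ J * exp (- (c * x ^ 2)) <= INR (fact (S J)) / c ^ M.
Proof.
  intros Hc HJ.
  set (y := c * x ^ 2).
  assert (Hy : 0 <= y) by (unfold y; apply Rmult_le_pos; [lra | apply pow2_ge_0]).
  assert (Hx : x ^ 2 = y / c) by (unfold y; field; lra).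
  rewrite Hx. pose proof (exp_ge_two y J Hy).
  assert (HcJ : 0 < c ^ J) by (apply pow_lt; lra).
  assert (HcM : 0 < c ^ M) by (apply pow_lt; lra).
  pose proof (pow_decr c J M Hc HJ).
  rewrite exp_Ropp.
  assert (He : 0 < exp y) by apply exp_pos.
  replace ((1 + y) * (y / c) ^ J * / exp y) with (((1 + y) * y ^ J) / exp y / c ^ J) by (rewrite pow_div by lra; field; lra).
  assert (((1 + y) * y ^ J) / exp y <= INR (fact (S J))).
  { apply (Rmult_le_reg_r (exp y)); auto. field_simplify; lra. }
  assert (0 <= INR (fact (S J))) by apply pos_INR.
  unfold Rdiv at 2. unfold Rdiv in H1.
  apply Rle_trans with (INR (fact (S J)) * / c ^ J).
  - apply Rmult_le_compat_r; auto. apply Rlt_le, Rinv_0_lt_compat; auto.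
  - apply Rmult_le_compat_l; auto. apply Rinv_le_contravar; auto.
Qed.

Lemma nat_b2 n : ((2 * n + 1) * 3 ^ n <= 3 * 4 ^ n)%nat.
Proof.
  induction n.
  - simpl. lia.
  - destruct n as [|[|[|n]]].
    + simpl. lia.
    + simpl. lia.
    + simpl. lia.
    + rewrite !Nat.pow_succ_r' in *. set (p := (3 ^ n)%nat) in *. set (q := (4 ^ n)%nat) in *.
      nia.
Qed.
Lemma nat_b1 n : ((n + 1) * 3 ^ n <= 2 * 4 ^ n)%nat.
Proof.
  induction n.
  - simpl. lia.
  - destruct n as [|[|n]].
    + simpl. lia.
    + simpl. lia.
    + rewrite !Nat.pow_succ_r' in *. set (p := (3 ^ n)%nat) in *. set (q := (4 ^ n)%nat) in *. nia.
Qed.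

Lemma Rb1 n : (INR n + 1) * 3 ^ n <= 2 * 4 ^ n.
Proof.
  pose proof (le_INR _ _ (nat_b1 n)) as H. rewrite !mult_INR, !pow_INR, plus_INR in H.
  replace (INR 3) with 3 in H by (simpl; ring). replace (INR 4) with 4 in H by (simpl; ring).
  replace (INR 2) with 2 in H by (simpl; ring). replace (INR 1) with 1 in H by (simpl; ring). exact H.
Qed.

Lemma Rb2 n : (2 * INR n + 1) * 3 ^ n <= 3 * 4 ^ n.
Proof.
  pose proof (le_INR _ _ (nat_b2 n)) as H. rewrite !mult_INR, !pow_INR, plus_INR, mult_INR in H.
  replace (INR 3) with 3 in H by (simpl; ring). replace (INR 4) with 4 in H by (simpl; ring).
  replace (INR 2) with 2 in H by (simpl; ring). replace (INR 1) with 1 in H by (simpl; ring). exact H.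
Qed.

Lemma numeric n : (INR n + 1) * (2 * INR n + 1) * 9 ^ n <= 4 * sqrt PI * sqrt (INR n + 1) * 16 ^ n.
Proof.
  pose proof (Rb1 n) as H1. pose proof (Rb2 n) as H2.
  assert (H3 : 0 <= 3 ^ n) by (apply pow_le; lra).
  assert (E9 : 9 ^ n = 3 ^ n * 3 ^ n) by (rewrite <- Rpow_mult_distr; f_equal; ring).
  assert (E16 : 16 ^ n = 4 ^ n * 4 ^ n) by (rewrite <- Rpow_mult_distr; f_equal; ring).
  pose proof (pos_INR n).
  assert (Hn : (INR n + 1) * (2 * INR n + 1) * 9 ^ n <= 6 * 16 ^ n).
  { rewrite E9, E16.
    replace ((INR n + 1) * (2 * INR n + 1) * (3 ^ n * 3 ^ n)) with (((INR n + 1) * 3 ^ n) * ((2 * INR n + 1) * 3 ^ n)) by ring.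
    replace (6 * (4 ^ n * 4 ^ n)) with ((2 * 4 ^ n) * (3 * 4 ^ n)) by ring.
    apply Rmult_le_compat.
    - apply Rmult_le_pos; lra.
    - apply Rmult_le_pos; lra.
    - exact H1.
    - exact H2. }
  assert (HPI : 1.5 <= sqrt PI).
  { rewrite <- (sqrt_pow2 1.5) by lra. apply sqrt_le_1_alt. pose proof PI2_3_2. lra. }
  set (r := sqrt (INR n + 1)).
  assert (Hr : r * r = INR n + 1) by (apply sqrt_sqrt; lra).
  assert (Hr1 : 1 <= r) by (unfold r; apply Rle_trans with (sqrt 1); [rewrite sqrt_1; lra | apply sqrt_le_1_alt; lra]).
  assert (H9 : 0 <= 9 ^ n) by (apply pow_le; lra).
  assert (H16 : 0 < 16 ^ n) by (apply pow_lt; lra).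
  set (A := (2 * INR n + 1) * 9 ^ n) in *.
  assert (HA : 0 <= A) by (unfold A; apply Rmult_le_pos; lra).
  replace ((INR n + 1) * (2 * INR n + 1) * 9 ^ n) with (r * (r * A)) by (rewrite <- Hr; unfold A; ring).
  replace (4 * sqrt PI * r * 16 ^ n) with (r * (4 * sqrt PI * 16 ^ n)) by ring.
  apply Rmult_le_compat_l. lra.
  assert (r * A <= (INR n + 1) * A) by (apply Rmult_le_compat_r; nra).
  assert ((INR n + 1) * A <= 6 * 16 ^ n) by (unfold A; rewrite <- Rmult_assoc; exact Hn).
  nra.
Qed.

Definition Ssum (n : nat) (x : R) : R :=
  sum_f_R0 (fun k => Acoef n k * (2 * Rabs x) ^ (2 * n - 2 * k)) n.

Lemma Acoef_pos n k : 0 <= Acoef n k.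
Proof. unfold Acoef. apply Rmult_le_pos. apply pos_INR.
  apply Rlt_le, Rinv_0_lt_compat, Rmult_lt_0_compat; apply INR_fact_lt_0. Qed.

Lemma sq_term_gen (A x : R) (J : nat) : (A * (2 * Rabs x) ^ J) ^ 2 = A ^ 2 * 4 ^ J * (x ^ 2) ^ J.
Proof.
  assert (E : ((2 * Rabs x) ^ J) ^ 2 = ((2 * Rabs x) ^ 2) ^ J) by (rewrite <- !pow_mult, Nat.mul_comm; reflexivity).
  rewrite Rpow_mult_distr, E. rewrite (Rpow_mult_distr 2 (Rabs x) 2), (pow2_abs x).
  rewrite Rpow_mult_distr. replace (2 ^ 2) with 4 by (simpl; lra). ring.
Qed.

Lemma sq_term n k x : (Acoef n k * (2 * Rabs x) ^ (2 * n - 2 * k)) ^ 2 =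
  Acoef n k ^ 2 * 4 ^ (2 * n - 2 * k) * (x ^ 2) ^ (2 * n - 2 * k).
Proof. apply sq_term_gen. Qed.

Lemma weighted_sum n c x : 0 < c <= 1 ->
  (1 + c * x ^ 2) * sum_f_R0 (fun k => (Acoef n k * (2 * Rabs x) ^ (2 * n - 2 * k)) ^ 2) n * exp (- (c * x ^ 2))
  <= INR (fact (2 * n)) * INR (S (2 * n)) * 6 ^ (2 * n) / c ^ (2 * n).
Proof.
  intros Hc.
  assert (HcM : 0 < c ^ (2 * n)) by (apply pow_lt; lra).
  set (w := (1 + c * x ^ 2) * exp (- (c * x ^ 2))).
  replace ((1 + c * x ^ 2) * sum_f_R0 (fun k => (Acoef n k * (2 * Rabs x) ^ (2 * n - 2 * k)) ^ 2) n * exp (- (c * x ^ 2)))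
    with (sum_f_R0 (fun k => (Acoef n k * (2 * Rabs x) ^ (2 * n - 2 * k)) ^ 2 * w) n)
    by (rewrite <- scal_sum; unfold w; ring).
  apply Rle_trans with (sum_f_R0 (fun k => (Acoef n k ^ 2 * 4 ^ (2 * n - 2 * k) * INR (fact (S (2 * n - 2 * k)))) * / c ^ (2 * n)) n).
  - apply sum_Rle. intros k Hk. rewrite sq_term. unfold w.
    pose proof (term_bound c x (2 * n - 2 * k) (2 * n) Hc ltac:(lia)).
    assert (0 <= Acoef n k ^ 2 * 4 ^ (2 * n - 2 * k)).
    { apply Rmult_le_pos. apply pow2_ge_0. apply pow_le; lra. }
    replace (Acoef n k ^ 2 * 4 ^ (2 * n - 2 * k) * (x ^ 2) ^ (2 * n - 2 * k) * ((1 + c * x ^ 2) * exp (- (c * x ^ 2))))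
      with ((Acoef n k ^ 2 * 4 ^ (2 * n - 2 * k)) * ((1 + c * x ^ 2) * (x ^ 2) ^ (2 * n - 2 * k) * exp (- (c * x ^ 2)))) by ring.
    replace (Acoef n k ^ 2 * 4 ^ (2 * n - 2 * k) * INR (fact (S (2 * n - 2 * k))) * / c ^ (2 * n))
      with ((Acoef n k ^ 2 * 4 ^ (2 * n - 2 * k)) * (INR (fact (S (2 * n - 2 * k))) / c ^ (2 * n))) by (unfold Rdiv; ring).
    apply Rmult_le_compat_l; auto.
  - rewrite <- scal_sum. unfold Rdiv. rewrite (Rmult_comm (/ c ^ (2 * n))).
    apply Rmult_le_compat_r. apply Rlt_le, Rinv_0_lt_compat; auto.
    apply sumA.
Qed.

Lemma point_bound n c x : 0 < c <= 1 ->
  (/ sqrt PI * / 2 ^ (2 * n) * / INR (fact (2 * n))) * Ssum n x ^ 2 * exp (- (c * x ^ 2))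
  <= (sqrt (INR n + 1) * 2 ^ (4 * n + 2) / c ^ (2 * n)) / (1 + c * x ^ 2).
Proof.
  intros Hc.
  assert (HD : 0 < 1 + c * x ^ 2) by (pose proof (pow2_ge_0 x); nra).
  assert (HcM : 0 < c ^ (2 * n)) by (apply pow_lt; lra).
  assert (HPI : 0 < sqrt PI) by (apply sqrt_lt_R0; pose proof PI_RGT_0; lra).
  assert (H2n : 0 < 2 ^ (2 * n)) by (apply pow_lt; lra).
  assert (Hf : 0 < INR (fact (2 * n))) by apply INR_fact_lt_0.
  set (P2 := / sqrt PI * / 2 ^ (2 * n) * / INR (fact (2 * n))).
  assert (HP2 : 0 < P2) by (unfold P2; repeat apply Rmult_lt_0_compat; apply Rinv_0_lt_compat; auto).
  set (e := exp (- (c * x ^ 2))).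
  assert (He : 0 < e) by apply exp_pos.
  set (Q := sum_f_R0 (fun k => (Acoef n k * (2 * Rabs x) ^ (2 * n - 2 * k)) ^ 2) n).
  assert (HS : Ssum n x ^ 2 <= INR (S n) * Q) by (apply cs_sum).
  pose proof (weighted_sum n c x Hc) as HW. fold Q e in HW.
  apply (Rmult_le_reg_l (1 + c * x ^ 2)); auto.
  replace ((1 + c * x ^ 2) * ((sqrt (INR n + 1) * 2 ^ (4 * n + 2) / c ^ (2 * n)) / (1 + c * x ^ 2)))
    with (sqrt (INR n + 1) * 2 ^ (4 * n + 2) / c ^ (2 * n)) by (field; lra).
  apply Rle_trans with (P2 * INR (S n) * ((1 + c * x ^ 2) * Q * e)).
  { replace ((1 + c * x ^ 2) * (P2 * Ssum n x ^ 2 * e)) with (P2 * ((1 + c * x ^ 2) * e) * Ssum n x ^ 2) by ring.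
    replace (P2 * INR (S n) * ((1 + c * x ^ 2) * Q * e)) with (P2 * ((1 + c * x ^ 2) * e) * (INR (S n) * Q)) by ring.
    apply Rmult_le_compat_l; auto. apply Rlt_le, Rmult_lt_0_compat; auto; apply Rmult_lt_0_compat; auto. }
  apply Rle_trans with (P2 * INR (S n) * (INR (fact (2 * n)) * INR (S (2 * n)) * 6 ^ (2 * n) / c ^ (2 * n))).
  { apply Rmult_le_compat_l; auto. apply Rmult_le_pos. lra. apply pos_INR. }
  assert (E6 : 6 ^ (2 * n) = 2 ^ (2 * n) * 9 ^ n).
  { rewrite !pow_mult. rewrite <- Rpow_mult_distr. f_equal. simpl; lra. }
  assert (E16 : 2 ^ (4 * n + 2) = 4 * 16 ^ n).
  { rewrite pow_add, pow_mult. replace (2 ^ 4) with 16 by (simpl; lra). replace (2 ^ 2) with 4 by (simpl; lra). ring. }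
  rewrite E6, E16.
  replace (P2 * INR (S n) * (INR (fact (2 * n)) * INR (S (2 * n)) * (2 ^ (2 * n) * 9 ^ n) / c ^ (2 * n)))
    with ((INR n + 1) * (2 * INR n + 1) * 9 ^ n / sqrt PI / c ^ (2 * n)).
  2: { unfold P2. rewrite S_INR, S_INR, mult_INR. simpl (INR 2). field. lra. }
  pose proof (numeric n) as Hnum.
  unfold Rdiv. apply Rmult_le_compat_r. apply Rlt_le, Rinv_0_lt_compat; auto.
  apply (Rmult_le_reg_r (sqrt PI)); auto.
  replace ((INR n + 1) * (2 * INR n + 1) * 9 ^ n * / sqrt PI * sqrt PI) with ((INR n + 1) * (2 * INR n + 1) * 9 ^ n) by (field; lra).
  lra.
Qed.

Lemma scal_C (r : R) (w : C) : scal r w = (RtoC r * w)%C.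
Proof. destruct w. unfold scal; simpl. unfold prod_scal, RtoC, Cmult; simpl. unfold scal; simpl; unfold mult; simpl. f_equal; ring. Qed.
Lemma pow_n_C (w : C) k : pow_n w k = Cpow w k.
Proof. induction k; simpl; auto. Qed.

Lemma Cmod_sum_n (f : nat -> C) N : Cmod (sum_n f N) <= sum_f_R0 (fun k => Cmod (f k)) N.
Proof.
  induction N.
  - rewrite sum_O. simpl. lra.
  - rewrite sum_Sn. simpl. eapply Rle_trans. apply Cmod_triangle. lra.
Qed.

Lemma Cmod_Csqrt (w : C) : Cmod (Csqrt w) = sqrt (Cmod w).
Proof.
  destruct w as [u v]. unfold Csqrt. simpl fst; simpl snd.
  assert (H1 : Rabs u <= Cmod (u, v)).
  { pose proof (Rmax_Cmod (u, v)). simpl in H. pose proof (Rmax_l (Rabs u) (Rabs v)). lra. }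
  assert (H2 : 0 <= (Cmod (u, v) + u) / 2) by (unfold Rabs in H1; destruct (Rcase_abs u); lra).
  assert (H3 : 0 <= (Cmod (u, v) - u) / 2) by (unfold Rabs in H1; destruct (Rcase_abs u); lra).
  unfold Cmod at 1. simpl fst; simpl snd. f_equal.
  assert (Hs : ((if Rlt_dec v 0 then -1 else 1) ^ 2) = 1) by (destruct (Rlt_dec v 0); ring).
  rewrite Rpow_mult_distr, Hs.
  rewrite !pow2_sqrt by auto. field.
Qed.

Lemma Cmod_Cexp (w : C) : Cmod (Cexp w) = exp (fst w).
Proof.
  destruct w as [u v]. unfold Cexp, Cmod. simpl fst; simpl snd.
  replace ((exp u * cos v) ^ 2 + (exp u * sin v) ^ 2) with (exp u ^ 2 * (sin v ^ 2 + cos v ^ 2)) by ring.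
  assert (Hsc : sin v ^ 2 + cos v ^ 2 = 1) by (rewrite <- (sin2_cos2 v); unfold Rsqr; ring).
  rewrite Hsc, Rmult_1_r. apply sqrt_pow2. apply Rlt_le, exp_pos.
Qed.

Lemma Cmod_z th : Cmod (Cexp (0, th)) = 1.
Proof. rewrite Cmod_Cexp. simpl. apply exp_0. Qed.

Lemma Nint_eq m th x : Nintegrand m (Cexp (0, th)) x =
  Cmod (orthoP m (Cexp (0, th) * RtoC x)%C) ^ 2 * exp (- (cos (2 * th) * x ^ 2)).
Proof.
  unfold Nintegrand, pmz, sigmaC.
  rewrite !Cmod_mult, Cmod_Csqrt, Cmod_z, sqrt_1, Cmod_Cexp.
  replace (fst (- (Cexp (0, th) * RtoC x * (Cexp (0, th) * RtoC x)) / RtoC 2)%C) with (- (cos (2 * th) * x ^ 2) / 2).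
  2: { unfold Cexp, Cdiv, Cinv, Cmult, Copp, RtoC. simpl. rewrite exp_0, cos_2a. field. }
  rewrite Rmult_1_l, Rpow_mult_distr.
  f_equal. match goal with |- exp ?a ^ 2 = _ => replace (exp a ^2) with (exp (a + a)) by (rewrite exp_plus; ring) end; f_equal; field.
Qed.

Definition contC (f : R -> C) x := @continuous R_UniformSpace C_UniformSpace f x.
Lemma contC_equiv f x : contC f x <-> @continuous R_UniformSpace (AbsRing_UniformSpace C_AbsRing) f x.
Proof. unfold contC, continuous, filterlim, filter_le, filtermap.
 split; intros H P HP; apply H; apply locally_C; auto. Qed.
Lemma cont_RtoC x : contC (fun y : R => RtoC y) x.
Proof.
  unfold contC.
  apply continuous_ext with (f := fun y : R => scal y (RtoC 1)).
  { intros y. unfold scal; simpl. unfold prod_scal. simpl. unfold RtoC. f_equal; unfold scal; simpl; unfold mult; simpl; ring. }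
  apply (@continuous_scal_l _ R_AbsRing (prod_NormedModule _ R_NormedModule R_NormedModule)). apply continuous_id.
Qed.
Lemma cont_Cmult (f g : R -> C) x : contC f x -> contC g x -> contC (fun y => Cmult (f y) (g y)) x.
Proof. rewrite !contC_equiv. intros. apply (@continuous_mult _ C_AbsRing); auto. Qed.
Lemma cont_Cplus (f g : R -> C) x : contC f x -> contC g x -> contC (fun y => Cplus (f y) (g y)) x.
Proof. intros. apply (@continuous_plus _ C_AbsRing C_NormedModule); auto. Qed.
Lemma cont_Cconst (c : C) x : contC (fun _ => c) x.
Proof. apply continuous_const. Qed.
Lemma cont_Cmod (f : R -> C) x : contC f x -> continuous (fun y => Cmod (f y)) x.
Proof. intros H. apply continuous_comp with (g := Cmod); auto.
 apply (@filterlim_norm C_AbsRing C_NormedModule). Qed.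

Lemma cont_sum_n (F : nat -> R -> C) N x : (forall k, contC (F k) x) -> contC (fun y => sum_n (fun k => F k y) N) x.
Proof.
  intros H. induction N.
  - unfold contC. apply continuous_ext with (f := F 0%nat). intros; rewrite sum_O; auto. apply H.
  - unfold contC. apply continuous_ext with (f := fun y => Cplus (sum_n (fun k => F k y) N) (F (S N) y)).
    intros; rewrite sum_Sn; auto. apply cont_Cplus; auto.
Qed.

Lemma cont_pow (f : R -> C) k x : contC f x -> contC (fun y => pow_n (f y) k) x.
Proof.
  intros H. induction k.
  - apply cont_Cconst.
  - unfold contC. apply continuous_ext with (f := fun y => Cmult (f y) (pow_n (f y) k)). intros; reflexivity.
    apply cont_Cmult; auto.
Qed.

Lemma cont_scal (r : R) (f : R -> C) x : contC f x -> contC (fun y => scal r (f y)) x.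
Proof.
  intros H. unfold contC. apply continuous_ext with (f := fun y => Cmult (RtoC r) (f y)).
  intros; rewrite scal_C; auto. apply cont_Cmult; auto. apply cont_Cconst.
Qed.

Lemma cont_orthoP m (z : C) x : contC (fun y => orthoP m (z * RtoC y)%C) x.
Proof.
  unfold orthoP. apply cont_scal. unfold hermiteH. apply cont_sum_n. intros k.
  apply cont_scal. apply cont_pow. apply cont_Cmult. apply cont_Cconst.
  apply cont_Cmult. apply cont_Cconst. apply cont_RtoC.
Qed.

Lemma cont_integrand m th x :
  continuous (fun y => Cmod (orthoP m (Cexp (0, th) * RtoC y)%C) ^ 2 * exp (- (cos (2 * th) * y ^ 2))) x.
Proof.
  apply (@continuous_mult _ R_AbsRing).
  - apply (@continuous_mult _ R_AbsRing). apply cont_Cmod, cont_orthoP.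
    apply (@continuous_mult _ R_AbsRing). apply cont_Cmod, cont_orthoP. apply continuous_const.
  - apply continuous_exp_comp. apply (@ex_derive_continuous R_AbsRing R_NormedModule). auto_derive. auto.
Qed.

Lemma herm_bound n w : Cmod (hermiteH (2 * n) w) <=
  sum_f_R0 (fun k => Acoef n k * (2 * Cmod w) ^ (2 * n - 2 * k)) n.
Proof.
  unfold hermiteH. rewrite Nat.div2_double.
  eapply Rle_trans. apply Cmod_sum_n.
  apply sum_Rle. intros k Hk.
  rewrite scal_C, pow_n_C, Cmod_mult, Cmod_R, Cmod_pow, Cmod_mult, Cmod_R.
  replace (Rabs 2) with 2 by (rewrite Rabs_pos_eq; lra).
  apply Req_le. f_equal. unfold Acoef.
  unfold Rdiv. rewrite Rmult_assoc, Rabs_mult, pow_1_abs, Rmult_1_l.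
  rewrite Rabs_pos_eq. reflexivity.
  apply Rmult_le_pos. apply pos_INR. apply Rlt_le, Rinv_0_lt_compat, Rmult_lt_0_compat; apply INR_fact_lt_0.
Qed.

Lemma Cmod_zx th x : Cmod (Cexp (0, th) * RtoC x)%C = Rabs x.
Proof. rewrite Cmod_mult, Cmod_z, Cmod_R. ring. Qed.

Lemma P2_eq n : (/ Rpower PI (1 / 4) * / Rpower 2 (INR (2 * n) / 2) * / sqrt (INR (fact (2 * n)))) ^ 2
  = / sqrt PI * / 2 ^ (2 * n) * / INR (fact (2 * n)).
Proof.
  assert (HPI : 0 < PI) by apply PI_RGT_0.
  assert (E1 : Rpower PI (1 / 4) ^ 2 = sqrt PI).
  { rewrite <- (Rpower_pow 2 (Rpower PI (1/4))) by (unfold Rpower; apply exp_pos).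
    rewrite Rpower_mult. rewrite <- Rpower_sqrt by auto. f_equal. simpl. field. }
  assert (E2 : Rpower 2 (INR (2 * n) / 2) ^ 2 = 2 ^ (2 * n)).
  { rewrite <- (Rpower_pow 2 (Rpower 2 _)) by (unfold Rpower; apply exp_pos).
    rewrite Rpower_mult. rewrite <- Rpower_pow by lra. f_equal. simpl. field. }
  assert (E3 : sqrt (INR (fact (2 * n))) ^ 2 = INR (fact (2 * n))) by (apply pow2_sqrt; apply pos_INR).
  rewrite !Rpow_mult_distr, !pow_inv, E1, E2, E3. reflexivity.
Qed.

Lemma orthoP_bound n th x :
  Cmod (orthoP (2 * n) (Cexp (0, th) * RtoC x)%C) ^ 2 <=
  (/ sqrt PI * / 2 ^ (2 * n) * / INR (fact (2 * n))) * Ssum n x ^ 2.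
Proof.
  unfold orthoP. rewrite scal_C, Cmod_mult, Cmod_R.
  rewrite <- P2_eq. rewrite Rpow_mult_distr, pow2_abs.
  apply Rmult_le_compat_l. apply pow2_ge_0.
  apply pow_incr. split. apply Cmod_ge_0.
  eapply Rle_trans. apply herm_bound. rewrite Cmod_zx. unfold Ssum. apply Req_le. reflexivity.
Qed.

Theorem theorem5 (theta : R) (n : nat) :
  Rabs theta < PI / 4 ->
  let z : C := Cexp (0%R, theta) in
  let s := sqrt (cos (2 * theta)) in
  exists N : R,
    is_RInt_gen (Nintegrand (2 * n) z) (Rbar_locally m_infty) (Rbar_locally p_infty) N /\
    N <= PI * sqrt (INR n + 1) * 2 ^ (4 * n + 2) / s ^ (4 * n + 1).
Proof.
  intros Hth z s.
  set (c := cos (2 * theta)).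
  assert (Hc : 0 < c <= 1).
  { split. unfold c. apply cos_gt_0; unfold Rabs in Hth; destruct (Rcase_abs theta); lra.
    unfold c. apply COS_bound. }
  set (K := sqrt (INR n + 1) * 2 ^ (4 * n + 2) / c ^ (2 * n)).
  assert (HK : 0 <= K).
  { unfold K. apply Rmult_le_pos. apply Rmult_le_pos. apply sqrt_pos. apply pow_le; lra.
    apply Rlt_le, Rinv_0_lt_compat, pow_lt; lra. }
  assert (Hcont : forall x, continuous (Nintegrand (2 * n) z) x).
  { intros x. apply continuous_ext with
      (f := fun y => Cmod (orthoP (2 * n) (Cexp (0, theta) * RtoC y)%C) ^ 2 * exp (- (cos (2 * theta) * y ^ 2))).
    intros y. symmetry. apply Nint_eq. apply cont_integrand. }
  assert (Hbnd : forall x, Nintegrand (2 * n) z x <= K / (1 + c * x ^ 2)).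
  { intros x. unfold z. rewrite Nint_eq. fold c.
    eapply Rle_trans. 2: apply (point_bound n c x Hc).
    apply Rmult_le_compat_r. apply Rlt_le, exp_pos. apply orthoP_bound. }
  destruct (improper_of_bound (Nintegrand (2 * n) z) (K * PI / sqrt c)) as [N [HN HNle]].
  - exact Hcont.
  - intros x. unfold Nintegrand. apply pow2_ge_0.
  - intros a b Hab. apply RInt_lorentz_bound; auto. lra.
  - exists N. split; auto. eapply Rle_trans. apply HNle.
    apply Req_le. unfold s. fold c. unfold K.
    assert (Hsc : 0 < sqrt c) by (apply sqrt_lt_R0; lra).
    assert (Es : sqrt c ^ (4 * n + 1) = c ^ (2 * n) * sqrt c).
    { rewrite pow_add, pow_1. f_equal. replace (4 * n)%nat with (2 * (2 * n))%nat by lia.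
      rewrite pow_mult. rewrite pow2_sqrt by lra. reflexivity. }
    rewrite Es. assert (0 < c ^ (2 * n)) by (apply pow_lt; lra). field. lra.
Qed.
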